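(* For every pair of integers $k \geqslant 2$ and $\ell \geqslant 0$ there exists a direction-determinate 2DFA with set of states $Q = Q^+ \cup Q^-$, where $|Q^+| = k$ and $|Q^-| = \ell$, which accepts at least one string and whose shortest accepted string has length exactly $\binom{k+\ell}{\ell+1} - 1$.
   Context: A two-way deterministic finite automaton (2DFA) is a quintuple $(\Sigma, Q, q_0, \delta, F)$ where $\Sigma$ is a finite alphabet not containing the end-markers $\vdash$ and $\dashv$, $Q$ is a finite set of states, $q_0 \in Q$ is the initial state, $\delta: Q \times (\Sigma \cup \{\vdash, \dashv\}) \to Q \times \{-1,+1\}$ is a partial transition function, and $F \subseteq Q$ is the set of accepting states. On input $w = a_1 \cdots a_m \in \Sigma^*$ the automaton works on the tape $\vdash a_1 \cdots a_m \dashv$, starting at $\vdash$ in state $q_0$; in state $q$ reading symbol $c$, if $\delta(q,c) = (r,d)$ it enters state $r$ and moves one cell in direction $d$ ($-1$ left, $+1$ right); if $\delta(q,c)$ is undefined it rejects. It accepts $w$ if it ever arrives at $\dashv$ in a state from $F$; it may also loop forever (not accepting). The number of states of the automaton is $|Q|$. A 2DFA is direction-determinate if there is a partition $Q = Q^+ \cup Q^-$, $Q^+ \cap Q^- = \emptyset$, such that every transition $\delta(q,c) = (r,+1)$ has $r \in Q^+$ and every transition $\delta(q,c) = (r,-1)$ has $r \in Q^-$. *)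

(* Defs.v *)
From mathcomp Require Import all_boot.
Set Implicit Arguments. Unset Strict Implicit. Unset Printing Implicit Defensive.

(* Tape symbols: the end-markers |- (LEnd), -| (REnd) and the letters of
   Sigma (so Sigma never contains the end-markers). *)
Inductive tsym (Sigma : Type) := LEnd | REnd | Letter of Sigma.
Arguments LEnd {Sigma}. Arguments REnd {Sigma}.

Inductive dir := Left | Right.

Record TwoDFA (Sigma Q : finType) := Mk2DFA {
  q0 : Q;
  delta : Q -> tsym Sigma -> option (Q * dir);
  final : {set Q}
}.

Section Semantics.
Variables (Sigma Q : finType) (A : TwoDFA Sigma Q).

(* Tape |- a_1 ... a_m -| : cell 0 is |-, cell i (1 <= i <= m) is a_i,
   cell m+1 is -|. *)
Definition tape (w : seq Sigma) (i : nat) : tsym Sigma :=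
  if i == 0 then LEnd else nth REnd (map (@Letter Sigma) w) i.-1.

(* One computation step on configuration (state, head position).
   None = the computation halts (undefined transition, which rejects;
   moving off either end of the tape is also treated as halting). *)
Definition step (w : seq Sigma) (c : Q * nat) : option (Q * nat) :=
  let: (q, i) := c in
  match delta A q (tape w i) with
  | None => None
  | Some (r, Right) => if i < (size w).+1 then Some (r, i.+1) else None
  | Some (r, Left) => if 0 < i then Some (r, i.-1) else None
  end.

Fixpoint run (w : seq Sigma) (n : nat) : option (Q * nat) :=
  match n with
  | 0 => Some (q0 A, 0)
  | n'.+1 => match run w n' with None => None | Some c => step w c end
  end.

Definition accepts (w : seq Sigma) : Prop :=
  exists n q, run w n = Some (q, (size w).+1) /\ q \in final A.

Definition dir_determinate_wrt (Qp Qm : {set Q}) : Prop :=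
  [/\ Qp :|: Qm = setT, [disjoint Qp & Qm] &
      forall q c r d, delta A q c = Some (r, d) ->
        (d = Right -> r \in Qp) /\ (d = Left -> r \in Qm)].

Definition direction_determinate : Prop :=
  exists Qp Qm, dir_determinate_wrt Qp Qm.

End Semantics.

(* Main.v *)
Require Import Defs.
From HB Require Import structures.
From mathcomp Require Import all_boot zify.
Set Implicit Arguments. Unset Strict Implicit. Unset Printing Implicit Defensive.

Lemma path_nseq_leq m a : path leq a (nseq m a).
Proof. by elim: m => //= m ->; rewrite leqnn. Qed.

Section Constr.
Variables n l : nat.
Local Notation K := n.+1.
Definition Tup := (l.+1).-tuple 'I_K.
Definition srt (t : Tup) := sorted leq (map val t).
Definition Sg := {t : Tup | srt t}.
HB.instance Definition _ := Finite.on Sg.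

Definition xv (x : Sg) (i : 'I_l.+1) : 'I_K := tnth (val x) i.

Lemma xv_mono (x : Sg) (i j : 'I_l.+1) : i <= j -> xv x i <= xv x j.
Proof.
move=> hij; rewrite /xv !(tnth_nth ord0).
have := @sorted_leq_nth _ leq leq_trans leqnn 0 _ (valP x) i j.
rewrite !inE size_map size_tuple !ltn_ord => /(_ isT isT hij).
by rewrite !(nth_map ord0) ?size_tuple ?ltn_ord.
Qed.

Lemma minP : srt [tuple of nseq l.+1 (ord0 : 'I_K)].
Proof. rewrite /srt /= map_nseq; exact: path_nseq_leq. Qed.
Lemma maxP : srt [tuple of nseq l.+1 (ord_max : 'I_K)].
Proof. rewrite /srt /= map_nseq; exact: path_nseq_leq. Qed.
Definition minS : Sg := @exist Tup srt _ minP.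
Definition maxS : Sg := @exist Tup srt _ maxP.

Lemma xv_min i : xv minS i = ord0.
Proof. by rewrite /xv (tnth_nth ord0) nth_nseq ltn_ord. Qed.
Lemma xv_max i : xv maxS i = ord_max.
Proof. by rewrite /xv (tnth_nth ord0) nth_nseq ltn_ord. Qed.

Lemma xv_inj (x y : Sg) : (forall i, xv x i = xv y i) -> x = y.
Proof. by move=> h; apply: val_inj; apply: eq_from_tnth. Qed.

Local Notation N := #|{: Sg}|.

Definition key (x : Sg) : nat := (\sum_(i < l.+1) xv x i) * N + enum_rank x.

Lemma key_inj : injective key.
Proof.
move=> x y H.
have : key x %% N = key y %% N by rewrite H.
rewrite /key !modnMDl !modn_small ?ltn_ord // => /eqP.
by rewrite (inj_eq val_inj) => /eqP /enum_rank_inj.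
Qed.

Lemma sum_lt (x y : Sg) : (forall i, xv x i <= xv y i) -> x != y ->
  \sum_(i < l.+1) xv x i < \sum_(i < l.+1) xv y i.
Proof.
move=> hle hne.
have [i hi] : exists i, xv x i < xv y i.
  apply/existsP; apply: contraNT hne; rewrite negb_exists => /forallP h.
  apply/eqP/xv_inj => i; apply: val_inj; apply/eqP; rewrite eqn_leq hle /=.
  by have := h i; rewrite -leqNgt.
rewrite (bigD1 i) //= [X in _ < X](bigD1 i) //=.
rewrite -addSn; apply: leq_add => //.
by apply: leq_sum => j _; apply: hle.
Qed.

Lemma key_mono (x y : Sg) : (forall i, xv x i <= xv y i) -> key x <= key y.
Proof.
move=> hle; case: (eqVneq x y) => [->//|hne].
have hs := sum_lt hle hne.
rewrite /key; set sx := \sum_(i < l.+1) _; set sy := \sum_(i < l.+1) _.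
have hr := ltn_ord (enum_rank x).
apply: leq_trans (leq_addr _ _).
apply: leq_trans (leq_mul hs (leqnn N)).
by rewrite mulSn addnC -/sx leq_add2r ltnW.
Qed.

Definition rk (x : Sg) : nat := #|[set y : Sg | key y < key x]|.

Lemma rk_mono x y : key x <= key y -> rk x <= rk y.
Proof.
move=> h; apply: subset_leq_card; apply/subsetP => z; rewrite !inE => hz.
exact: leq_trans hz h.
Qed.

Definition succ (x : Sg) : Sg :=
  if [pick y : Sg | key x < key y] is Some y0
  then [arg min_(y < y0 | key x < key y) key y] else x.

Lemma succ_spec x y : key x < key y ->
  key x < key (succ x) /\ forall z, key x < key z -> key (succ x) <= key z.
Proof.
move=> hy; rewrite /succ; case: pickP => [y0 hy0|/(_ y)]; last by rewrite hy.
by case: arg_minnP => // s hs hmin; split.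
Qed.

Lemma rk_succ x y : key x < key y -> rk (succ x) = (rk x).+1.
Proof.
move=> hy; have [h1 h2] := succ_spec hy; rewrite /rk.
have -> : [set z : Sg | key z < key (succ x)] = x |: [set z : Sg | key z < key x].
  apply/setP => z; rewrite !inE.
  case: (eqVneq z x) => [->|hzx] //=.
  apply/idP/idP => hz; last exact: ltn_trans hz h1.
  rewrite ltn_neqAle; apply/andP; split.
    by apply: contra hzx => /eqP /key_inj ->.
  by rewrite leqNgt; apply/negP => /h2; rewrite leqNgt hz.
by rewrite cardsU1 inE ltnn.
Qed.

Lemma rk_succ_le x : rk (succ x) <= (rk x).+1.
Proof.
case: (boolP [exists y, key x < key y]) => [/existsP [y hy]|].
  by rewrite (rk_succ hy).
rewrite negb_exists => /forallP hn.
rewrite /succ; case: pickP => [y0 hy0|_]; last exact: leqnSn.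
by move: (hn y0); rewrite hy0.
Qed.

Lemma le_max x i : xv x i <= xv maxS i.
Proof. by rewrite xv_max -ltnS ltn_ord. Qed.

Lemma rk_top x : (forall y, key y <= key x) -> rk x = N.-1.
Proof.
move=> h; rewrite /rk -(cardsC1 x); apply: eq_card => z; rewrite !inE.
case: (eqVneq z x) => [->|hzx]; first by rewrite ltnn.
by rewrite ltn_neqAle h andbT; apply: contra hzx => /eqP /key_inj ->.
Qed.

Lemma rk_max : rk maxS = N.-1.
Proof. by apply: rk_top => y; apply: key_mono => i; apply: le_max. Qed.

Lemma rk_min : rk minS = 0.
Proof.
apply/eqP; rewrite cards_eq0; apply/eqP/setP => z; rewrite !inE ltnNge.
by rewrite key_mono // => i; rewrite xv_min.
Qed.

Lemma rk_eq_max x : rk x = N.-1 -> x = maxS.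
Proof.
move=> h; apply/eqP; apply/negPn/negP => hne.
have hk : key x < key maxS.
  rewrite ltn_neqAle key_mono ?andbT; last by move=> i; apply: le_max.
  by apply: contra hne => /eqP /key_inj ->.
have : rk x < rk maxS.
  apply: proper_card; apply/properP; split.
    by apply/subsetP => z; rewrite !inE => hz; apply: ltn_trans hz hk.
  by exists x; rewrite !inE ?ltnn.
by rewrite h rk_max ltnn.
Qed.

Lemma first_max x : xv x ord0 = ord_max -> x = maxS.
Proof.
move=> h; apply: xv_inj => i; apply/val_inj/eqP; rewrite xv_max eqn_leq.
rewrite -ltnS ltn_ord /=.
by have := @xv_mono x ord0 i (leq0n _); rewrite h.
Qed.


Definition Qt := ('I_K + 'I_l)%type.

Definition fgt (x : Sg) (v : 'I_K) (i0 : 'I_l.+1) : 'I_l.+1 :=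
  [arg min_(i < i0 | v < xv x i) (i : nat)].

Definition delta (q : Qt) (c : tsym Sg) : option (Qt * dir) :=
  match c, q with
  | LEnd, inl _ => Some (inl ord0, Right)
  | Letter x, inl v =>
      match [pick i | v < xv x i] with
      | None => Some (inl (xv (succ x) ord0), Right)
      | Some i0 => match unlift ord0 (fgt x v i0) with
                   | None => None
                   | Some j => Some (inr j, Left) end end
  | Letter x, inr j => Some (inl (xv (succ x) (lift ord0 j)), Right)
  | _, _ => None
  end.

Definition Aut : TwoDFA Sg Qt := Mk2DFA (inl ord0) delta [set inl ord_max].

Section Run.
Variable w : seq Sg.
Local Notation m := (size w).

Definition lett p := nth minS w p.-1.
Definition O p := if p == 0 then minS else succ (lett p).
Definition Gd b := forall i, i <= b -> rk (O i) <= i.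

Definition Inv (c : Qt * nat) : Prop :=
  match c with
  | (inl v, p) => p = 0 \/
      (0 < p <= m /\ Gd p.-1 /\ forall t, xv (lett p) t <= v -> xv (lett p) t <= xv (O p.-1) t)
      \/ (p = m.+1 /\ Gd m /\ v = xv (O m) ord0)
  | (inr j, p) => p < m /\ Gd p /\
      forall t : 'I_l.+1, t < lift ord0 j -> xv (lett p.+1) t <= xv (O p) t
  end.

Lemma tape_mid p : 0 < p <= m -> tape w p = Letter (lett p).
Proof.
case: p => //= p pm; rewrite /tape /= (nth_map minS) //.
Qed.

Lemma tape_end : tape w m.+1 = REnd.
Proof. by rewrite /tape /= nth_default // size_map. Qed.

Lemma O_succ p : 0 < p -> O p = succ (lett p).
Proof. by case: p. Qed.

Lemma inv_step c c' : Inv c -> step Aut w c = Some c' -> Inv c'.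
Proof.
case: c => [[v|j] p]; rewrite /step.
- case=> [->|[[hpm [hg hloc]]|[-> [hg hv]]]].
  + rewrite /= => [[<-]] /=; right.
    have hg0 : Gd 0 by move=> i; rewrite leqn0 => /eqP ->; rewrite /O /= rk_min.
    case: (posnP m) => [m0|mp].
      by right; rewrite m0; split => //; split => //; rewrite /O /= xv_min.
    left; split; first by [].
    split => // t; rewrite /O /= xv_min => ht; exact: ht.
  + case/andP: hpm => p0 pm.
    rewrite tape_mid ?p0 ?pm //= ; set x := lett p.
    case: pickP => [i0 hi0|hn].
    * rewrite /fgt; case: arg_minnP => // istar hist hmin.
      case: unliftP => [jj hjj|//] [<-]; rewrite /Inv.
      split; first by rewrite prednK.
      split => // t; rewrite prednK // -hjj => ht.
      apply: hloc; rewrite leqNgt; apply/negP => /hmin; by rewrite leqNgt ht.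
    * have hpw : forall t, xv x t <= xv (O p.-1) t.
        by move=> t1; apply: hloc; rewrite leqNgt hn.
      have hrp : rk (O p) <= p.
        rewrite O_succ // -/x; apply: leq_trans (rk_succ_le x) _.
        rewrite -(prednK p0) ltnS; apply: leq_trans (hg _ (leqnn _)).
        by apply: rk_mono; apply: key_mono.
      have hgp : Gd p.
        move=> i; rewrite leq_eqVlt => /orP [/eqP ->//|].
        by rewrite -(prednK p0) ltnS => /hg.
      rewrite ltnS pm => [[<-]] /=; right.
      case: (ltngtP p m) => [hpm|hpm|hpm].
      - left; split; first by [].
        split => // t ht; apply: leq_trans ht _; rewrite O_succ //.
        by apply: xv_mono.
      - by move: hpm; rewrite ltnNge pm.
      - by right; rewrite -hpm; split => //; split => //; rewrite O_succ.
  + by rewrite tape_end.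
- case=> [pm [hg hloc]]; case: p pm hg hloc => [|p] pm hg hloc.
    by rewrite /tape.
  rewrite tape_mid /=; last by rewrite ltnW.
  rewrite ltnS ltnW // => [[<-]] /=; right; left.
  split; first by [].
  split => // t; rewrite -O_succ //.
  case: (ltnP t (lift ord0 j)) => [ht _|ht hu]; first exact: hloc.
  apply: leq_trans hu _; exact: xv_mono.
Qed.

Lemma inv_run k c : run Aut w k = Some c -> Inv c.
Proof.
elim: k c => [|k IH] c /=; first by move=> [<-]; left.
case h: (run Aut w k) => [c0|] // hs; exact: inv_step (IH _ h) hs.
Qed.

Lemma lower : accepts Aut w -> N.-1 <= m.
Proof.
case=> k [q [hr hq]]; have := inv_run hr.
move: hq; rewrite inE => /eqP ->.
case=> [//|[[hpm _]|[_ [hg hv]]]]; first by move: hpm; rewrite ltnn andbF.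
have hm : O m = maxS by apply: first_max; rewrite -hv.
by rewrite -rk_max -hm hg.
Qed.

Definition Reach c := exists k, run Aut w k = Some c.

Lemma reach_step c c' : Reach c -> step Aut w c = Some c' -> Reach c'.
Proof. by case=> k hk hs; exists k.+1; rewrite /= hk. Qed.

Lemma step_inl p (v : 'I_K) : 0 < p <= m -> (forall i, xv (lett p) i <= v) ->
  step Aut w (inl v, p) = Some (inl (xv (O p) ord0), p.+1).
Proof.
move=> /andP [p0 pm] hall; rewrite /step tape_mid ?p0 ?pm //=.
case: pickP => [i hi|_]; first by move: hi; rewrite ltnNge hall.
by rewrite ltnS pm O_succ.
Qed.

Lemma step_inl_bounce p (v : 'I_K) i : 0 < p <= m -> v < xv (lett p) i ->
  xv (lett p) ord0 <= v ->
  exists j, step Aut w (inl v, p) = Some (inr j, p.-1) /\ v < xv (lett p) (lift ord0 j).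
Proof.
move=> /andP [p0 pm] hi hv0; rewrite /step tape_mid ?p0 ?pm //=.
case: pickP => [i1 hi1|hn]; last by move: (hn i); rewrite /= hi.
rewrite /fgt; case: arg_minnP => // s hs hm.
case: unliftP => [j hj|h0]; last by move: hs; rewrite h0 ltnNge hv0.
by exists j; rewrite -hj.
Qed.

Lemma step_inr p j : 0 < p <= m ->
  step Aut w (inr j, p) = Some (inl (xv (O p) (lift ord0 j)), p.+1).
Proof.
move=> /andP [p0 pm]; rewrite /step tape_mid ?p0 ?pm //=.
by rewrite ltnS pm O_succ.
Qed.

Lemma chain p (v : 'I_K) : 0 < p <= m -> lett p = O p.-1 -> xv (lett p) ord0 <= v ->
  Reach (inl v, p) -> Reach (inl (xv (O p) ord0), p.+1).
Proof.
move=> hp hlet; case/andP: (hp) => p0 pm.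
have [d hd] : exists d, K - v <= d by exists (K - v).
elim: d v hd => [|d IH] v hd hv0 hr.
  by move: hd; rewrite leqn0 subn_eq0 leqNgt ltn_ord.
case: (boolP [forall i, xv (lett p) i <= v]) => [/forallP hall|].
  exact: reach_step hr (step_inl hp hall).
rewrite negb_forall => /existsP [i]; rewrite -ltnNge => hi.
have [j [hs hvj]] := step_inl_bounce hp hi hv0.
have r1 := reach_step hr hs.
have p1 : 1 < p.
  rewrite ltn_neqAle p0 andbT; apply/eqP => hp1.
  by move: hvj; rewrite hlet -hp1 /O /= xv_min.
have hp' : 0 < p.-1 <= m by rewrite -ltnS prednK // p1 /= (leq_trans (leq_pred _)).
have r2 := reach_step r1 (step_inr j hp').
rewrite prednK // -hlet in r2.
apply: (IH _ _ _ r2).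
  by lia.
exact: leq_trans hv0 (ltnW hvj).
Qed.

End Run.

Definition xs t := iter t succ minS.

Lemma rk_xs t : t <= N.-1 -> rk (xs t) = t.
Proof.
elim: t => [|t IH] ht; first by rewrite rk_min.
have IH' := IH (ltnW ht).
case: (boolP [exists y, key (xs t) < key y]) => [/existsP [y hy]|].
  by rewrite /xs iterS (rk_succ hy) -/(xs t) IH'.
rewrite negb_exists => /forallP hn.
have : rk (xs t) = N.-1 by apply: rk_top => y; rewrite leqNgt hn.
by rewrite IH' => ht'; move: ht; rewrite ht' ltnn.
Qed.

Lemma xs_max : xs N.-1 = maxS.
Proof. exact: rk_eq_max (rk_xs (leqnn _)). Qed.

Definition wit := mkseq xs N.-1.

Lemma O_wit q : q <= size wit -> O wit q = xs q.
Proof.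
case: q => [//|q] hq; rewrite size_mkseq in hq.
by rewrite /O /= /lett /= nth_mkseq.
Qed.

Lemma wit_reach q : q <= size wit -> Reach wit (inl (xv (O wit q) ord0), q.+1).
Proof.
elim: q => [|q IH] hq.
  by rewrite /Reach; exists 1; rewrite /O /= xv_min.
have hlet : lett wit q.+1 = O wit q.
  rewrite O_wit ?(ltnW hq) // /lett /= nth_mkseq //.
  by rewrite size_mkseq in hq.
apply: chain (IH (ltnW hq)) => //.
by rewrite hlet.
Qed.

Lemma wit_acc : accepts Aut wit.
Proof.
have [k hk] := wit_reach (leqnn _).
exists k, (inl (xv (O wit (size wit)) ord0)); split => //.
by rewrite O_wit // size_mkseq xs_max xv_max inE.
Qed.

Lemma cardN : N = 'C(l.+1 + n, l.+1).
Proof.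
rewrite card_sig -card_sorted_tuples; apply: eq_card => t; rewrite !inE //.
Qed.

Definition Qp : {set Qt} := inl @: [set: 'I_K].
Definition Qm : {set Qt} := inr @: [set: 'I_l].

Lemma dd : dir_determinate_wrt Aut Qp Qm.
Proof.
split.
- apply/setP => q; rewrite !inE; case: q => [a|b]; apply/orP; [left|right];
    apply: imset_f; exact: in_setT.
- rewrite -setI_eq0; apply/eqP/setP => q; rewrite !inE.
  apply/negP => /andP [/imsetP [x1 _ h1] /imsetP [x2 _ h2]]; by rewrite h1 in h2.
- move=> q c r d; rewrite /= /delta.
  case: c => [||x]; case: q => [v|j] //=.
  + by move=> [<- <-]; split => // _; apply: imset_f; exact: in_setT.
  + case: pickP => [i0 _|_].
      case: unlift => [j|] // [<- <-]; split => // _; apply: imset_f; exact: in_setT.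
    by move=> [<- <-]; split => // _; apply: imset_f; exact: in_setT.
  + by move=> [<- <-]; split => // _; apply: imset_f; exact: in_setT.
Qed.

Lemma cardQp : #|Qp| = K.
Proof. by rewrite card_imset ?cardsT ?card_ord // => a b [->]. Qed.
Lemma cardQm : #|Qm| = l.
Proof. by rewrite card_imset ?cardsT ?card_ord // => a b [->]. Qed.

End Constr.

Theorem theorem3 (k l : nat) (hk : 2 <= k) :
  exists (Sigma Q : finType) (A : TwoDFA Sigma Q) (Qp Qm : {set Q}),
    [/\ dir_determinate_wrt A Qp Qm, #|Qp| = k, #|Qm| = l,
        (exists w, accepts A w) &
        (exists w, accepts A w /\ size w = 'C(k + l, l.+1) - 1) /\
        (forall w, accepts A w -> 'C(k + l, l.+1) - 1 <= size w)].
Proof.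
case: k hk => [//|n] _.
have hC : 'C(n.+1 + l, l.+1) = #|{: Sg n l}|.
  by rewrite cardN (addnC n.+1) addnS -addSn.
exists (Sg n l), (Qt n l), (Aut n l), (Qp n l), (Qm n l).
split.
- exact: dd.
- exact: cardQp.
- exact: cardQm.
- by exists (wit n l); exact: wit_acc.
- split.
    exists (wit n l); split; first exact: wit_acc.
    by rewrite size_mkseq hC subn1.
  by move=> w hw; rewrite hC subn1; exact: lower hw.
Qed.
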